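(* Let $R$ be a commutative ring with identity and let $(S,\leq)$ be a strictly ordered monoid. Suppose $S=S_1\sqcup S_2$ is a disjoint union of subsets $S_1,S_2$. Define $P:[[R^{S,\leq}]]\to[[R^{S,\leq}]]$ by $$P(f)(s)=\begin{cases} f(s), & s\in S_1,\\ 0, & s\in S_2,\end{cases}\qquad f\in [[R^{S,\leq}]],\ s\in S.$$ Then $([[R^{S,\leq}]],P)$ is a Rota-Baxter algebra (of weight $-1$) if and only if $S_1$ and $S_2$ are both subsemigroups of $S$ (i.e. each is closed under the monoid operation).
   Context: All monoids are commutative and written additively with neutral element $0$. An ordered set means a partially ordered set; it is artinian if every strictly decreasing sequence is finite, and narrow if every subset of pairwise incomparable elements is finite. A strictly ordered monoid is a commutative monoid $S$ with a partial order $\leq$ such that $s<s'$ implies $s+t<s'+t$ for all $s,s',t\in S$. The ring of generalized power series $[[R^{S,\leq}]]$ is the set of all maps $f:S\to R$ whose support $\mathrm{supp}(f)=\{s\in S: f(s)\neq 0\}$ is artinian and narrow, with pointwise addition and convolution product $(fg)(s)=\sum_{(u,v)} f(u)g(v)$, the sum over the (finite) set of pairs $(u,v)\in S\times S$ with $u+v=s$, $f(u)\neq0$, $g(v)\neq 0$. A Rota-Baxter algebra (of weight $-1$) is an associative $R$-algebra $A$ with an $R$-linear operator $P:A\to A$ satisfying $P(x)P(y)=P(xP(y))+P(P(x)y)-P(xy)$ for all $x,y\in A$. *)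

(* Defs.v *)
From HB Require Import structures.
From mathcomp Require Import all_boot all_order all_algebra.
From mathcomp Require Import boolp classical_sets cardinality fsbigop.
Set Implicit Arguments. Unset Strict Implicit. Unset Printing Implicit Defensive.
Import Order.TTheory GRing.Theory Num.Theory.
Local Open Scope classical_set_scope.
Local Open Scope ring_scope.

Section GPS.
Variables (S : nmodType) (le : S -> S -> Prop).

Definition slt (x y : S) : Prop := le x y /\ x <> y.

Definition strictly_ordered_monoid : Prop :=
  [/\ (forall x, le x x),
      (forall x y, le x y -> le y x -> x = y),
      (forall x y z, le x y -> le y z -> le x z) &
      (forall s s' t, slt s s' -> slt (s + t) (s' + t))].

Definition artinian (A : set S) : Prop :=
  ~ exists u : nat -> S, (forall n, A (u n)) /\ (forall n, slt (u n.+1) (u n)).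

Definition narrow (A : set S) : Prop :=
  forall B : set S, B `<=` A ->
    (forall x y, B x -> B y -> x <> y -> ~ le x y /\ ~ le y x) ->
    finite_set B.

Variable R : comNzRingType.

Definition supp (f : S -> R) : set S := [set s | f s != 0].

(* membership in the ring of generalized power series [[R^{S,le}]] *)
Definition is_gps (f : S -> R) : Prop := artinian (supp f) /\ narrow (supp f).

(* convolution product: sum over the (finite, for f g in [[R^{S,le}]]) set of
   pairs (u,v) with u + v = s, f u <> 0, g v <> 0 *)
Definition gps_mul (f g : S -> R) (s : S) : R :=
  \sum_(p \in [set p : S * S | p.1 + p.2 = s /\ f p.1 != 0 /\ g p.2 != 0])
     (f p.1 * g p.2).

Definition proj_op (S1 : set S) (f : S -> R) (s : S) : R :=
  if `[< S1 s >] then f s else 0.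

Definition rota_baxter_gps (P : (S -> R) -> (S -> R)) : Prop :=
  (forall (a : R) f g, is_gps f -> is_gps g ->
      P (fun s => a * f s + g s) = (fun s => a * P f s + P g s)) /\
  (forall f g, is_gps f -> is_gps g ->
      gps_mul (P f) (P g) =
      (fun s => P (gps_mul f (P g)) s + P (gps_mul (P f) g) s - P (gps_mul f g) s)).

Definition subsemigroup (A : set S) : Prop :=
  forall x y, A x -> A y -> A (x + y).

End GPS.

(* Main.v *)
Require Import Defs.
From HB Require Import structures.
From mathcomp Require Import all_boot all_order all_algebra.
From mathcomp Require Import finmap boolp classical_sets functions cardinality fsbigop.
Set Implicit Arguments. Unset Strict Implicit. Unset Printing Implicit Defensive.
Import Order.TTheory GRing.Theory Num.Theory.
Local Open Scope classical_set_scope.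
Local Open Scope ring_scope.

Lemma terminal (r : nat -> nat -> Prop) :
 (exists phi : nat -> nat, (forall k, (phi k < phi k.+1)%N) /\
     forall i j, (i < j)%N -> ~ r (phi i) (phi j)) \/
 (exists phi : nat -> nat, forall k, (phi k < phi k.+1)%N /\ r (phi k) (phi k.+1)).
Proof.
pose T i := forall j, (i < j)%N -> ~ r i j.
have [H|H] := pselect (forall n, exists i, (n <= i)%N /\ T i).
  have [c Hc] := choice H.
  pose phi := fix phi k := if k is k'.+1 then c (phi k').+1 else c 0%N.
  have Hm : forall k, (phi k < phi k.+1)%N by move=> k; exact: (Hc _).1.
  left; exists phi; split => // i j ij.
  have : (phi i < phi j)%N by apply: (homo_ltn (r := fun a b => (a < b)%N) ltn_trans Hm).
  case: i {ij} => [|i]; [exact: (Hc 0%N).2| exact: (Hc _).2].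
right.
have [n Hn] : exists n, ~ exists i, (n <= i)%N /\ T i by apply/existsNP.
have H2 : forall i, exists j, (n <= i)%N -> (i < j)%N /\ r i j.
  move=> i; have [ni|ni] := boolP (n <= i)%N; last by exists 0%N.
  have : ~ T i by move=> Ti; apply: Hn; exists i.
  move=> /existsNP[j /not_implyP[ij /contrapT rij]]; by exists j.
have [d Hd] := choice H2.
pose phi := fix phi k := if k is k'.+1 then d (phi k') else n.
have Hge : forall k, (n <= phi k)%N.
  elim=> [|k IH] //=; have := (Hd _ IH).1; move/ltnW; exact: leq_trans IH.
by exists phi => k; exact: (Hd _ (Hge k)).
Qed.

Lemma inf_seq (T : choiceType) (A : set T) : infinite_set A ->
  exists u : nat -> T, (forall n, A (u n)) /\ injective u.
Proof.
elim/choicePpointed: T => T in A *; first by rewrite emptyE => /(_ (finite_set0 _)).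
move=> /infiniteP/ppcard_leP[f]; exists (fun n => f n); split.
  by move=> n; apply: funS.
move=> m n; apply: inj; by rewrite ?inE.
Qed.
Section Seqs.
Variables (S : nmodType) (le : S -> S -> Prop).
Hypothesis slm : strictly_ordered_monoid le.

Lemma le_refl x : le x x. Proof. by case: slm. Qed.
Lemma le_anti x y : le x y -> le y x -> x = y. Proof. by case: slm => _ H _ _; apply: H. Qed.
Lemma le_trans' x y z : le x y -> le y z -> le x z. Proof. by case: slm => _ _ H _; apply: H. Qed.
Lemma slt_add s s' t : slt le s s' -> slt le (s + t) (s' + t). Proof. by case: slm => _ _ _ H; apply: H. Qed.
Lemma le_add a b t : le a b -> le (a + t) (b + t).
Proof.
move=> ab; have [->|nab] := pselect (a = b); first exact: le_refl.
by have [] := slt_add t (conj ab nab).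
Qed.

Lemma chain (w : nat -> S) : (forall k, le (w k) (w k.+1)) ->
  forall i j, (i <= j)%N -> le (w i) (w j).
Proof.
move=> H i j ij; rewrite -(subnKC ij); elim: (j - i)%N => [|d IH].
  by rewrite addn0; apply: le_refl.
by rewrite addnS; apply: le_trans' IH (H _).
Qed.

Lemma good (A : set S) : artinian le A -> narrow le A ->
  forall u : nat -> S, (forall n, A (u n)) -> exists i j, (i < j)%N /\ le (u i) (u j).
Proof.
move=> art nar u Au; apply: contrapT => Hn.
have H : forall i j, (i < j)%N -> ~ le (u i) (u j).
  by move=> i j ij lij; apply: Hn; exists i, j.
have [[phi [phim Hphi]]|[phi Hphi]] := terminal (fun i j => slt le (u j) (u i)).
- have phil : forall i j, (i < j)%N -> (phi i < phi j)%N.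
    exact: (homo_ltn (r := fun a b => (a < b)%N) ltn_trans phim).
  have inc : forall i j, i <> j -> ~ le (u (phi i)) (u (phi j)).
    move=> i j /eqP; rewrite neq_ltn => /orP[ij|ji] lij.
      exact: (H _ _ (phil _ _ ij)).
    have [e|ne] := pselect (u (phi j) = u (phi i)).
      by apply: (H _ _ (phil _ _ ji)); rewrite e; apply: le_refl.
    by apply: (Hphi _ _ ji); split => //; apply/nesym.
  have inj : injective (fun n => u (phi n)).
    move=> i j eij; apply: contrapT => nij; apply: (inc _ _ nij).
    by rewrite eij; apply: le_refl.
  have fin : finite_set [set u (phi n) | n in [set: nat]].
    apply: nar; first by move=> _ [n _ <-].
    move=> _ _ [i _ <-] [j _ <-] neq; have nij : i <> j by move=> ij; apply: neq; rewrite ij.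
    by split; apply: inc => // ji; apply: nij.
  apply: infinite_nat.
  rewrite -(eq_finite_set (@inj_card_eq _ _ [set: nat] (fun n => u (phi n)) _)) //.
  by move=> i j _ _; apply: inj.
- apply: art; exists (fun n => u (phi n)); split => // n.
  exact: (Hphi n).2.
Qed.

Lemma mono_sub (A : set S) : artinian le A -> narrow le A ->
  forall u : nat -> S, (forall n, A (u n)) ->
  exists phi : nat -> nat, forall k, (phi k < phi k.+1)%N /\ le (u (phi k)) (u (phi k.+1)).
Proof.
move=> art nar u Au.
have [[phi [phim Hphi]]|//] := terminal (fun i j => le (u i) (u j)).
have [i [j [ij lij]]] := @good A art nar (fun n => u (phi n)) (fun n => Au (phi n)).
by have := Hphi _ _ ij.
Qed.

Lemma finite_pairs (A B : set S) s : artinian le A -> narrow le A ->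
  artinian le B -> narrow le B ->
  finite_set [set p : S * S | p.1 + p.2 = s /\ A p.1 /\ B p.2].
Proof.
move=> artA narA artB narB; apply: contrapT => /inf_seq [p [Hp pinj]].
have [phi1 H1] := @mono_sub A artA narA (fun n => (p n).1) (fun n => (Hp n).2.1).
have [phi2 H2] := @mono_sub B artB narB (fun n => (p (phi1 n)).2) (fun n => (Hp _).2.2).
have m1 : forall i j, (i < j)%N -> (phi1 i < phi1 j)%N.
  exact: (homo_ltn (r := fun a b => (a < b)%N) ltn_trans (fun k => (H1 k).1)).
have lt01 := (H2 0%N).1.
have le1 : le (p (phi1 (phi2 0%N))).1 (p (phi1 (phi2 1%N))).1.
  by apply: (chain (w := fun n => (p (phi1 n)).1)) => [k|]; [exact: (H1 k).2 | exact: ltnW].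
have le2 := (H2 0%N).2.
have neq : p (phi1 (phi2 0%N)) <> p (phi1 (phi2 1%N)).
  by move=> /pinj E; move: (m1 _ _ lt01); rewrite E ltnn.
move: le1 le2 neq (Hp (phi1 (phi2 0%N))).1 (Hp (phi1 (phi2 1%N))).1.
case: (p (phi1 (phi2 0%N))) => a0 b0; case: (p (phi1 (phi2 1%N))) => a1 b1 /= la lb neq e0 e1.
have [ea|na] := pselect (a0 = a1).
- subst a1; have nb : b0 <> b1 by move=> eb; apply: neq; rewrite eb.
  have [_] := slt_add a0 (conj lb nb).
  by rewrite addrC e0 addrC e1.
- have [l1 n1] := slt_add b0 (conj la na).
  have l2 : le (a1 + b0) (a1 + b1) by rewrite addrC [a1 + b1]addrC; apply: le_add.
  apply: n1; apply: le_anti => //; rewrite e0 //; rewrite -e1 //.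
Qed.
End Seqs.
Section Main.
Variables (R : comNzRingType) (S : nmodType) (le : S -> S -> Prop).

Definition delta (x : S) : S -> R := fun s => (s == x)%:R.

Lemma delta_neq0 x s : (delta x s != 0) = (s == x).
Proof. by rewrite /delta; case: (s == x) => /=; rewrite ?oner_neq0 ?eqxx. Qed.

Lemma is_gps_delta x : strictly_ordered_monoid le -> is_gps le (delta x).
Proof.
move=> slm; split.
- move=> [u [Hu Hs]]; have [_] := Hs 0%N.
  move: (Hu 0%N) (Hu 1%N); rewrite /supp /= !delta_neq0 => /eqP -> /eqP ->; done.
- move=> B BS _; apply: (sub_finite_set _ (finite_set1 x)).
  by move=> s /BS; rewrite /supp /= delta_neq0 => /eqP.
Qed.

Lemma gps_mul_delta x y : gps_mul (delta x) (delta y) (x + y) = 1.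
Proof.
rewrite /gps_mul.
have -> : [set p : S * S | p.1 + p.2 = x + y /\ delta x p.1 != 0 /\ delta y p.2 != 0]
   = [set (x, y)].
  apply/seteqP; split => [[a b] /= [_ []]|[a b] /= [-> ->]].
    by rewrite !delta_neq0 => /eqP -> /eqP ->.
  by rewrite !delta_neq0 !eqxx.
by rewrite fsbig_set1 /delta /= !eqxx mulr1.
Qed.

Lemma gps_mul0l g : gps_mul (fun _ : S => 0 : R) g = fun _ => 0.
Proof. by apply/funext => s; rewrite /gps_mul fsbig1 // => i _; rewrite mul0r. Qed.
Lemma gps_mul0r f : gps_mul f (fun _ : S => 0 : R) = fun _ => 0.
Proof. by apply/funext => s; rewrite /gps_mul fsbig1 // => i _; rewrite mulr0. Qed.

Lemma gps_mul_fin (f g f' g' : S -> R) s :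
  (forall u, f' u = f u \/ f' u = 0) -> (forall u, g' u = g u \/ g' u = 0) ->
  finite_set [set p : S * S | p.1 + p.2 = s /\ f p.1 != 0 /\ g p.2 != 0] ->
  gps_mul f' g' s =
  \sum_(p <- fset_set [set p : S * S | p.1 + p.2 = s /\ f p.1 != 0 /\ g p.2 != 0])
     f' p.1 * g' p.2.
Proof.
move=> Hf Hg fin; rewrite /gps_mul -fsbig_finite //.
apply: fsbig_widen.
  move=> [a b] /= [-> [fa gb]]; split => //; split.
    by case: (Hf a) fa => [<-|->] //; rewrite eqxx.
  by case: (Hg b) gb => [<-|->] //; rewrite eqxx.
move=> [a b] [[e [fa gb]] H]; rewrite /preimage /=.
have [fa'|fa'] := eqVneq (f' a) 0; first by rewrite fa' mul0r.
have [gb'|gb'] := eqVneq (g' b) 0; first by rewrite gb' mulr0.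
by case: H.
Qed.
End Main.

Theorem theorem2p1 (R : comNzRingType) (S : nmodType) (le : S -> S -> Prop)
  (S1 S2 : set S) :
  strictly_ordered_monoid le ->
  S1 `|` S2 = setT -> S1 `&` S2 = set0 ->
  (rota_baxter_gps le (@proj_op S R S1) <-> subsemigroup S1 /\ subsemigroup S2).
Proof.
move=> slm HU HI.
have in12 : forall u, ~ S1 u -> S2 u.
  move=> u n1; have : (S1 `|` S2) u by rewrite HU.
  by case.
have disj : forall u, S1 u -> S2 u -> False.
  by move=> u a b; have : (S1 `&` S2) u by []; rewrite HI.
split.
- move=> [_ rb]; split.
  + move=> x y x1 y1; apply: contrapT => nxy.
    have := congr1 (fun F => F (x + y)) (rb _ _ (@is_gps_delta R S le x slm) (@is_gps_delta R S le y slm)).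
    have Pd : forall z, S1 z -> proj_op S1 (delta R z) = delta R z.
      move=> z z1; apply/funext => s; rewrite /proj_op; case: asboolP => // ns.
      by rewrite /delta; case: eqP => // e; case: ns; rewrite e.
    rewrite /= !Pd // gps_mul_delta /proj_op; case: asboolP => // _.
    by rewrite addr0 subr0 => /eqP; rewrite oner_eq0.
  + move=> x y x2 y2; apply: contrapT => nxy; have xy1 : S1 (x + y) by apply: contrapT => /in12.
    have := congr1 (fun F => F (x + y)) (rb _ _ (@is_gps_delta R S le x slm) (@is_gps_delta R S le y slm)).
    have Pd : forall z, S2 z -> proj_op S1 (delta R z) = fun _ => 0.
      move=> z z2; apply/funext => s; rewrite /proj_op; case: asboolP => // s1.
      by rewrite /delta; case: eqP => // e; case: (disj z) => //; rewrite -e.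
    rewrite /= !Pd // gps_mul0l gps_mul0r /proj_op; case: asboolP => // _.
    rewrite gps_mul_delta add0r gps_mul0l sub0r => /eqP; rewrite eq_sym oppr_eq0 oner_eq0.
    done.
- move=> [c1 c2]; split.
  + move=> a f g _ _; apply/funext => s; rewrite /proj_op; case: asboolP => //.
    by rewrite mulr0 addr0.
  + move=> f g [af nf] [ag ng]; apply/funext => s.
    have fin := finite_pairs slm s af nf ag ng.
    have Pf : forall h : S -> R, forall u, proj_op S1 h u = h u \/ proj_op S1 h u = 0.
      by move=> h u; rewrite /proj_op; case: asboolP; [left|right].
    have Pf' : forall h : S -> R, forall u, h u = h u \/ h u = 0 by move=> h u; left.
    have P0 : forall h : S -> R, ~ S1 s -> proj_op S1 h s = 0.
      by move=> h ns; rewrite /proj_op; case: asboolP.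
    have P1 : forall h : S -> R, S1 s -> proj_op S1 h s = h s.
      by move=> h ns; rewrite /proj_op; case: asboolP.
    have [s1|s1] := pselect (S1 s); last first.
      rewrite !P0 // subr0 addr0.
      rewrite /gps_mul fsbig1 // => -[a b] /= [e [fa gb]].
      move: fa gb; rewrite /proj_op; case: asboolP => a1; last by rewrite eqxx.
      case: asboolP => b1; last by rewrite eqxx.
      by case: s1; rewrite -e; apply: c1.
    rewrite !P1 //.
    rewrite (gps_mul_fin (Pf f) (Pf g) fin) (gps_mul_fin (Pf' f) (Pf g) fin).
    rewrite (gps_mul_fin (Pf f) (Pf' g) fin) (gps_mul_fin (Pf' f) (Pf' g) fin).
    rewrite -big_split -sumrB /=; apply: eq_big_seq => -[a b].
    rewrite in_fset_set // inE /= => -[e _].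
    rewrite /proj_op; case: asboolP => a1; case: asboolP => b1.
    * by rewrite addrK.
    * by rewrite mulr0 add0r subrr.
    * by rewrite mul0r addr0 subrr.
    * by case: (disj s) => //; rewrite -e; apply: c2; apply: in12.
Qed.
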